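(* Let $a_1,\dots,a_n\in\mathbb{F}$ be pairwise non-$(\sigma,\delta)$-conjugate, let $r_1,\dots,r_n\in\mathbb{Z}_+$ and $N=\sum_{i=1}^n r_i$. For all $b_{i,j}\in\mathbb{F}$ ($j=1,\dots,r_i$, $i=1,\dots,n$) there exists a unique $F\in\mathbb{F}[x;\sigma,\delta]$ with $\deg(F)<N$ such that $F^{(j-1)}(a_i)=b_{i,j}$ for all $j=1,\dots,r_i$ and $i=1,\dots,n$. In particular, setting $\mathbf{a}_i=(a_i,\dots,a_i)\in\mathbb{F}^{r_i}$, the $N\times N$ confluent Vandermonde matrix $V_N(\mathbf{a}_1,\dots,\mathbf{a}_n)$ is invertible.
   Context: Let $\mathbb{F}$ be a division ring, $\sigma$ a ring endomorphism and $\delta$ a $\sigma$-derivation; $\mathbb{F}[x;\sigma,\delta]$ is the skew polynomial ring with $xa=\sigma(a)x+\delta(a)$, having right Euclidean division. Elements $a,b$ are $(\sigma,\delta)$-conjugate if $b=\sigma(\beta)a\beta^{-1}+\delta(\beta)\beta^{-1}$ for some $\beta\in\mathbb{F}^*$. For $\mathbf{a}=(a_1,\dots,a_r)\in\mathbb{F}^r$ put $P_{\mathbf a}=(x-a_r)\cdots(x-a_2)(x-a_1)$. The Hasse derivative $D_{\mathbf a}(F)\in\mathbb{F}$ of $F$ is the unique element such that $F=GP_{\mathbf a}+D_{\mathbf a}(F)H$ for some $G,H$ with $H$ monic of degree $r-1$ (equivalently, the coefficient of $x^{r-1}$ in the remainder of right division of $F$ by $P_{\mathbf a}$). For $a\in\mathbb{F}$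 and $i\ge 0$, $F^{(i)}(a)=D_{(a,\dots,a)}(F)$ with $i+1$ entries. For sequences $\mathbf a_i=(a_{i,1},\dots,a_{i,r_i})$ with prefixes $\mathbf a_{i,j}=(a_{i,1},\dots,a_{i,j})$, $V_N(\mathbf a_i)$ is the $N\times r_i$ matrix with $(k,j)$ entry $D_{\mathbf a_{i,j}}(x^{k-1})$ ($k=1,\dots,N$), and $V_N(\mathbf a_1,\dots,\mathbf a_n)=(V_N(\mathbf a_1),\dots,V_N(\mathbf a_n))$. *)

(* Defs.v *)
From HB Require Import structures.
From mathcomp Require Import all_boot all_order all_algebra.
Set Implicit Arguments. Unset Strict Implicit. Unset Printing Implicit Defensive.
Import Order.TTheory GRing.Theory Num.Theory.
Local Open Scope ring_scope.

(* Skew polynomials over a (possibly non-commutative) ring K, in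
   K[x; sigma, delta] with x a = sigma(a) x + delta(a).
   A skew polynomial  sum_i p_i x^i  (coefficients on the LEFT) is represented
   by its coefficient list, reusing the carrier {poly K}: the additive
   structure, size (= deg + 1), coefficients p`_i, 'X^i, c%:P are those of
   {poly K}; the MULTIPLICATION is the skew one, [skmul] below (the
   commutative-style product of {poly K} is never used for skew products). *)

Section Skew.
Variables (K : unitRingType) (sigma : K -> K) (delta : K -> K).

(* left multiplication by x :  x * (sum p_i x^i) = sum (sigma(p_i) x^(i+1) + delta(p_i) x^i) *)
Definition skmulX (p : {poly K}) : {poly K} :=
  \poly_(i < (size p).+1) (sigma p`_i.-1 * (0 < i)%:R + delta p`_i).

Definition skmul (p q : {poly K}) : {poly K} :=
  \sum_(i < size p) p`_i *: iter i skmulX q.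

(* remainder of RIGHT Euclidean division of f by the monic P:
   f = G * P + R with deg R < deg P; repeatedly subtract lc(f) x^(d-r) * P. *)
Fixpoint skrem_rec (n : nat) (P f : {poly K}) : {poly K} :=
  match n with
  | 0 => f
  | n'.+1 => if (size f < size P)%N then f
             else skrem_rec n' P (f - lead_coef f *: skmul 'X^(size f - size P) P)
  end.

Definition skrem (f P : {poly K}) : {poly K} := skrem_rec (size f) P f.

(* P_a = (x - a_r) ... (x - a_2)(x - a_1) for a = [:: a_1; ...; a_r] *)
Definition Pseq (s : seq K) : {poly K} :=
  foldl (fun acc a => skmul ('X - a%:P) acc) 1 s.

Definition hasseD (s : seq K) (f : {poly K}) : K :=
  (skrem f (Pseq s))`_(size s).-1.

(* F^(i)(a) = D_{(a,...,a)}(F) with i+1 entries *)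
Definition hderiv (i : nat) (a : K) (f : {poly K}) : K := hasseD (nseq i.+1 a) f.

Definition sd_conj (a b : K) : Prop :=
  exists2 beta : K, beta != 0 &
    b = sigma beta * a * beta^-1 + delta beta * beta^-1.

(* confluent Vandermonde matrix V_N(a_1,...,a_n) with a_i = (a i, ..., a i)
   (r i entries); columns ordered block by block, within block i the column
   j = 1..r_i corresponds to the prefix a_{i,j} = (a i) repeated j times;
   row k = 1..N corresponds to x^(k-1). *)
Definition conf_cols (n : nat) (a : 'I_n -> K) (r : 'I_n -> nat) : seq (K * nat) :=
  flatten [seq [seq (a i, j.+1) | j <- iota 0 (r i)] | i <- enum 'I_n].

Definition conf_vdm (n : nat) (a : 'I_n -> K) (r : 'I_n -> nat) (N : nat)
  : 'M[K]_N :=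
  \matrix_(k < N, c < N)
     let: (ai, j) := nth (0, 0%N) (conf_cols a r) c in hasseD (nseq j ai) 'X^k.

End Skew.

(* Main.v *)
Require Import Defs.
From HB Require Import structures.
From mathcomp Require Import all_boot all_order all_algebra.
Import GRing.Theory.
From mathcomp Require Import zify.
Set Implicit Arguments. Unset Strict Implicit. Unset Printing Implicit Defensive.
Local Open Scope ring_scope.


Section SkewAlg.
Variables (K : unitRingType)
  (Kdiv : forall x : K, x != 0 -> x \is a GRing.unit)
  (sigma : {rmorphism K -> K})
  (delta : {additive K -> K})
  (delta_der : forall u v : K, delta (u * v) = sigma u * delta v + delta u * v).

Local Notation mX := (skmulX sigma delta).
Local Notation smul := (skmul sigma delta).

Lemma delta1 : delta 1 = 0.
Proof.
have := delta_der 1 1; rewrite rmorph1 !mul1r mulr1 => h.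
by apply/(addrI (delta 1)); rewrite addr0 -h.
Qed.

Lemma coef_mX (p : {poly K}) i : (mX p)`_i = (if i is i'.+1 then sigma p`_i' else 0) + delta p`_i.
Proof.
rewrite /skmulX coef_poly; case: ltnP => Hi.
  by case: i Hi => [|i] _ /=; rewrite ?mulr0 ?mulr1.
rewrite nth_default ?raddf0 ?addr0; last by apply: leq_trans Hi.
case: i Hi => [|i] //= Hi; by rewrite nth_default ?rmorph0.
Qed.

Lemma mXD (p q : {poly K}) : mX (p + q) = mX p + mX q.
Proof.
apply/polyP => i; rewrite coefD !coef_mX !coefD raddfD.
case: i => [|i]; first by rewrite !add0r.
by rewrite coefD rmorphD addrACA.
Qed.

Lemma mX0 : mX 0 = 0.
Proof. by apply/polyP => i; rewrite coef_mX coef0 raddf0 addr0; case: i => //= i; rewrite coef0 rmorph0. Qed.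

Lemma mXZ c (p : {poly K}) : mX (c *: p) = sigma c *: mX p + delta c *: p.
Proof.
apply/polyP => i; rewrite coefD !coefZ !coef_mX !coefZ delta_der mulrDr addrA.
case: i => [|i]; first by rewrite mulr0 !add0r.
by rewrite coefZ rmorphM.
Qed.

Lemma mXN (p : {poly K}) : mX (- p) = - mX p.
Proof. by apply/eqP; rewrite -subr_eq0 opprK -mXD addNr mX0. Qed.

Lemma mX_sum I (r : seq I) (P : pred I) (F : I -> {poly K}) :
  mX (\sum_(i <- r | P i) F i) = \sum_(i <- r | P i) mX (F i).
Proof. by elim/big_rec2: _ => [|i x y _ <-]; rewrite ?mX0 ?mXD. Qed.

Lemma iterD i (p q : {poly K}) : iter i mX (p + q) = iter i mX p + iter i mX q.
Proof. by elim: i => //= i ->; rewrite mXD. Qed.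
Lemma iter0 i : iter i mX 0 = 0.
Proof. by elim: i => //= i ->; rewrite mX0. Qed.
Lemma iterN i (p : {poly K}) : iter i mX (- p) = - iter i mX p.
Proof. by elim: i => //= i ->; rewrite mXN. Qed.

Lemma mXXn i : mX ('X^i) = 'X^(i.+1).
Proof.
apply/polyP => k; rewrite coef_mX !coefXn.
have db (b : bool) : delta b%:R = 0 by case: b; rewrite ?raddf0 ?delta1.
case: k => [|k] /=; first by rewrite db add0r.
by rewrite coefXn db addr0 rmorph_nat eqSS.
Qed.

Lemma iterXn i : iter i mX 1 = 'X^i.
Proof. by elim: i => [|i IH] /=; rewrite ?expr0 // IH mXXn. Qed.

Lemma skmul_bound (p q : {poly K}) m : (size p <= m)%N ->
  smul p q = \sum_(i < m) p`_i *: iter i mX q.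
Proof.
move=> Hm; rewrite /skmul (big_ord_widen _ (fun i => p`_i *: iter i mX q) Hm) big_mkcond.
apply: eq_bigr => i _; case: ifP => // /negbT; rewrite -leqNgt => H.
by rewrite nth_default // scale0r.
Qed.

Lemma skmulDl (p q s : {poly K}) : smul (p + q) s = smul p s + smul q s.
Proof.
rewrite !(@skmul_bound _ _ (maxn (size p) (size q))) ?leq_maxl ?leq_maxr ?size_add //.
by rewrite -big_split; apply: eq_bigr => i _; rewrite coefD scalerDl.
Qed.

Lemma skmulZl c (p s : {poly K}) : smul (c *: p) s = c *: smul p s.
Proof.
rewrite !(@skmul_bound _ _ (size p)) ?size_scale_leq // scaler_sumr.
by apply: eq_bigr => i _; rewrite coefZ scalerA.
Qed.

Lemma skmul0l (s : {poly K}) : smul 0 s = 0.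
Proof. by rewrite /skmul size_poly0 big_ord0. Qed.

Lemma skmulNl (p s : {poly K}) : smul (- p) s = - smul p s.
Proof. by rewrite -scaleN1r skmulZl scaleN1r. Qed.

Lemma skmulBl (p q s : {poly K}) : smul (p - q) s = smul p s - smul q s.
Proof. by rewrite skmulDl skmulNl. Qed.

Lemma skmul_suml I (r : seq I) (P : pred I) (F : I -> {poly K}) s :
  smul (\sum_(i <- r | P i) F i) s = \sum_(i <- r | P i) smul (F i) s.
Proof. by elim/big_rec2: _ => [|i x y _ <-]; rewrite ?skmul0l ?skmulDl. Qed.

Lemma skmulXnl i (q : {poly K}) : smul 'X^i q = iter i mX q.
Proof.
rewrite /skmul size_polyXn big_ord_recr /= coefXn eqxx scale1r big1 ?add0r //.
by move=> j _; rewrite coefXn /= ltn_eqF ?scale0r.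
Qed.

Lemma skmulCl c (q : {poly K}) : smul c%:P q = c *: q.
Proof.
have -> : c%:P = c *: 'X^0 by rewrite expr0 -mul_polyC mulr1.
by rewrite skmulZl skmulXnl.
Qed.

Lemma skmul1l (q : {poly K}) : smul 1 q = q.
Proof. by rewrite -(expr0 'X) skmulXnl. Qed.

Lemma skmulDr (p q s : {poly K}) : smul p (q + s) = smul p q + smul p s.
Proof. by rewrite /skmul -big_split; apply: eq_bigr => i _; rewrite iterD scalerDr. Qed.

Lemma skmul0r (p : {poly K}) : smul p 0 = 0.
Proof. by rewrite /skmul big1 // => i _; rewrite iter0 scaler0. Qed.

Lemma skmulNr (p q : {poly K}) : smul p (- q) = - smul p q.
Proof. by rewrite /skmul -sumrN; apply: eq_bigr => i _; rewrite iterN scalerN. Qed.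

Lemma skmulBr (p q s : {poly K}) : smul p (q - s) = smul p q - smul p s.
Proof. by rewrite skmulDr skmulNr. Qed.

Lemma skmulr1 (p : {poly K}) : smul p 1 = p.
Proof.
rewrite /skmul; under eq_bigr do rewrite iterXn.
by rewrite -poly_def coefK.
Qed.

Lemma mX_expand (p : {poly K}) :
  mX p = \sum_(i < size p) (sigma p`_i *: 'X^(i.+1) + delta p`_i *: 'X^i).
Proof.
rewrite -{1}[p]coefK poly_def mX_sum; apply: eq_bigr => i _.
by rewrite mXZ mXXn.
Qed.

Lemma skmul_mX (p q : {poly K}) : smul (mX p) q = mX (smul p q).
Proof.
rewrite mX_expand skmul_suml {2}/skmul mX_sum; apply: eq_bigr => i _.
by rewrite skmulDl !skmulZl !skmulXnl mXZ.
Qed.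

Lemma skmul_iter i (q s : {poly K}) : smul (iter i mX q) s = iter i mX (smul q s).
Proof. by elim: i => //= i IH; rewrite skmul_mX IH. Qed.

Lemma skmulA (p q s : {poly K}) : smul (smul p q) s = smul p (smul q s).
Proof.
have -> : smul p q = \sum_(i < size p) p`_i *: iter i mX q by [].
rewrite skmul_suml; apply: eq_bigr => i _.
by rewrite skmulZl skmul_iter.
Qed.

Lemma coef_size (p : {poly K}) i : p`_i != 0 -> (i < size p)%N.
Proof. by rewrite ltnNge; apply: contra => /leq_sizeP ->. Qed.

Lemma mX_monic (p : {poly K}) : p \is monic ->
  (mX p \is monic) && (size (mX p) == (size p).+1).
Proof.
move=> mp; have sp : (0 < size p)%N by rewrite size_poly_gt0 monic_neq0.
have E : (mX p)`_(size p) = 1.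
  rewrite coef_mX (nth_default 0 (leqnn _)) raddf0 addr0.
  case: (size p) sp (lead_coefE p) (monicP mp) => // m _ /= <- ->.
  by rewrite rmorph1.
have S : size (mX p) = (size p).+1.
  rewrite /skmulX size_poly_eq //= (nth_default 0 (leqnn _)) raddf0 addr0 sp mulr1.
  by rewrite -lead_coefE (monicP mp) rmorph1 oner_neq0.
by rewrite S eqxx andbT; apply/monicP; rewrite lead_coefE S.
Qed.

Lemma iter_monic i (q : {poly K}) : q \is monic ->
  (iter i mX q \is monic) && (size (iter i mX q) == (size q + i)%N).
Proof.
move=> mq; elim: i => [|i /andP [m1 /eqP s1]]; first by rewrite /= mq addn0 eqxx.
move: (mX_monic m1) => /andP [H1 /eqP H2].
by rewrite /= H1 H2 s1 addnS eqxx.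
Qed.

Lemma scale_monic c (M : {poly K}) : M \is monic -> c != 0 ->
  size (c *: M) = size M /\ lead_coef (c *: M) = c.
Proof.
move=> mM c0; have sM : (0 < size M)%N by rewrite size_poly_gt0 monic_neq0.
have E : (c *: M)`_(size M).-1 = c by rewrite coefZ -lead_coefE (monicP mM) mulr1.
have S : size (c *: M) = size M.
  apply/eqP; rewrite eqn_leq size_scale_leq /=.
  by have := coef_size (p := c *: M) (i := (size M).-1); rewrite E prednK // => ->.
by split=> //; rewrite lead_coefE S E.
Qed.

Lemma skmul_monic (p q : {poly K}) : q \is monic -> p != 0 ->
  size (smul p q) = (size p + size q).-1 /\ lead_coef (smul p q) = lead_coef p.
Proof.
move=> mq p0; have sq : (0 < size q)%N by rewrite size_poly_gt0 monic_neq0.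
have [d sp] : exists d, size p = d.+1.
  by exists (size p).-1; rewrite prednK // size_poly_gt0.
have ld : p`_d != 0 by rewrite -[d]/(d.+1.-1) -sp -lead_coefE lead_coef_eq0.
have [mT sT] : (iter d mX q \is monic) /\ size (iter d mX q) = (size q + d)%N.
  by have /andP [-> /eqP ->] := iter_monic d mq.
have [sT' lT] := scale_monic mT ld.
have Ssum : (size (\sum_(i < d) p`_(widen_ord (leqnSn d) i) *:
               iter (widen_ord (leqnSn d) i) mX q)%R < size q + d)%N.
  apply: (big_ind (fun x : {poly K} => (size x < size q + d)%N)).
  - by rewrite size_poly0 addn_gt0 sq.
  - move=> x y Hx Hy; apply: leq_ltn_trans (size_polyD _ _) _.
    by rewrite gtn_max Hx Hy.
  - move=> i _; apply: leq_ltn_trans (size_scale_leq _ _) _.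
    have /andP [_ /eqP ->] := iter_monic (widen_ord (leqnSn d) i) mq.
    by rewrite ltn_add2l; exact: ltn_ord i.
rewrite (@skmul_bound _ _ d.+1) ?sp // big_ord_recr /= addrC.
have lt := Ssum; rewrite -sT -sT' in lt.
rewrite size_polyDl // lead_coefDl // lT sT' sT lead_coefE sp.
by split => //; rewrite addnC.
Qed.

Lemma skmul_cancel (p p' q : {poly K}) : q \is monic -> smul p q = smul p' q -> p = p'.
Proof.
move=> mq E; apply/eqP; rewrite -subr_eq0; apply/negP => /negP H.
have [S _] := skmul_monic mq H.
have : smul (p - p') q = 0 by rewrite skmulBl E subrr.
move=> E0; move: S; rewrite E0 size_poly0.
have sq : (0 < size q)%N by rewrite size_poly_gt0 monic_neq0.
have sp : (0 < size (p - p')%R)%N by rewrite size_poly_gt0.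
case: (size (p - p')) sp => // m _; rewrite addSn /= => /esym /eqP.
by rewrite addn_eq0 => /andP [_ /eqP sq0]; move: sq; rewrite sq0.
Qed.

Local Notation srem := (skrem_rec sigma delta).

Lemma skrem_rec_spec (P : {poly K}) n (f : {poly K}) : P \is monic -> (size f <= n)%N ->
  (size (srem n P f) < size P)%N /\ exists G, f = smul G P + srem n P f.
Proof.
move=> mP; have sP : (0 < size P)%N by rewrite size_poly_gt0 monic_neq0.
elim: n f => [|n IH] f Hf /=.
  move: Hf; rewrite size_poly_leq0 => /eqP ->; split; first by rewrite size_poly0.
  by exists 0; rewrite skmul0l addr0.
case: ifP => H; first by split=> //; exists 0; rewrite skmul0l add0r.
move/negbT: H; rewrite -leqNgt => H.
set d := (size f - size P)%N.
set f' := f - lead_coef f *: smul 'X^d P.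
have [mM sM] : (smul 'X^d P \is monic) /\ size (smul 'X^d P) = size f.
  rewrite skmulXnl; have /andP [-> /eqP ->] := iter_monic d mP.
  by rewrite /d subnKC.
have f0 : (0 < size f)%N by apply: leq_trans H.
have Hf' : (size f' <= (size f).-1)%N.
  apply/leq_sizeP => j Hj; rewrite /f' coefB coefZ.
  case: (eqVneq j (size f).-1) => [-> | ne].
    by rewrite -lead_coefE -sM -lead_coefE (monicP mM) mulr1 subrr.
  have Hj2 : (size f <= j)%N by rewrite -(prednK f0) ltn_neqAle eq_sym ne Hj.
  by rewrite !nth_default ?mulr0 ?subr0 // sM.
have Hfn : (size f' <= n)%N by apply: leq_trans Hf' _; rewrite -ltnS prednK.
have [S1 [G EG]] := IH f' Hfn.
split => //; exists (G + lead_coef f *: 'X^d).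
rewrite skmulDl skmulZl -addrA [_ *: _ + _]addrC addrA -EG.
by rewrite /f' subrK.
Qed.

Lemma skrem_spec (P f : {poly K}) : P \is monic ->
  (size (skrem sigma delta f P) < size P)%N /\ exists G, f = smul G P + skrem sigma delta f P.
Proof. by move=> mP; apply: skrem_rec_spec. Qed.

Lemma skrem_uniq (P G R : {poly K}) : P \is monic -> (size R < size P)%N ->
  skrem sigma delta (smul G P + R) P = R.
Proof.
move=> mP sR; have [S [G' E]] := skrem_spec (smul G P + R) mP.
set R' := skrem _ _ _ _ in S E *.
have E2 : smul (G - G') P = R' - R.
  have EG : smul G P = smul G' P + R' - R by rewrite -E addrK.
  by apply/eqP; rewrite skmulBl subr_eq EG -addrA addrC.
have GG : G - G' = 0.
  apply/eqP; apply/negP => /negP H; have [S2 _] := skmul_monic mP H.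
  have : (size (R' - R)%R < size P)%N.
    by apply: leq_ltn_trans (size_polyD _ _) _; rewrite size_polyN gtn_max S sR.
  have h1 : (0 < size (G - G')%R)%N by rewrite size_poly_gt0.
  rewrite -E2 S2; lia.
by move: E2; rewrite GG skmul0l => /eqP; rewrite eq_sym subr_eq0 => /eqP.
Qed.

Local Notation Ps := (Pseq sigma delta).

Lemma Pseq_fold (s : seq K) (acc : {poly K}) :
  foldl (fun acc a => smul ('X - a%:P) acc) acc s = smul (Ps s) acc.
Proof.
elim: s acc => [|a s IH] acc /=; first by rewrite /Pseq /= skmul1l.
rewrite IH /Pseq /= -/(Pseq _ _ _) IH skmulr1 skmulA //.
Qed.

Lemma Pseq_cons a s : Ps (a :: s) = smul (Ps s) ('X - a%:P).
Proof. by rewrite /Pseq /= Pseq_fold skmulr1. Qed.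

Lemma Pseq_rcons s a : Ps (rcons s a) = smul ('X - a%:P) (Ps s).
Proof. by rewrite /Pseq foldl_rcons. Qed.

Lemma Pseq_cat s1 s2 : Ps (s1 ++ s2) = smul (Ps s2) (Ps s1).
Proof. by rewrite /Pseq foldl_cat Pseq_fold. Qed.

Lemma Pseq_monic s : Ps s \is monic /\ size (Ps s) = (size s).+1.
Proof.
elim/last_ind: s => [|s a [m S]]; first by rewrite /Pseq /= monic1 size_poly1.
rewrite Pseq_rcons.
have X0 : 'X - a%:P != 0 :> {poly K} by rewrite monic_neq0 // monicXsubC.
have [S3 L3] := skmul_monic (p := 'X - a%:P) m X0.
by rewrite S3 size_XsubC S size_rcons; split => //; apply/monicP; rewrite L3 lead_coefXsubC.
Qed.

Definition rdiv (P F : {poly K}) := exists G, F = smul G P.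

Lemma rdiv_mull (P F H : {poly K}) : rdiv P F -> rdiv P (smul H F).
Proof. by case=> G ->; exists (smul H G); rewrite skmulA. Qed.

Lemma rdiv_trans (P Q F : {poly K}) : rdiv P Q -> rdiv Q F -> rdiv P F.
Proof. by case=> G -> [H ->]; exists (smul H G); rewrite skmulA. Qed.

Lemma rdiv1 (F : {poly K}) : rdiv 1 F.
Proof. by exists F; rewrite skmulr1. Qed.

Lemma rdiv_nseq j m (x : K) : (j <= m)%N -> rdiv (Ps (nseq j x)) (Ps (nseq m x)).
Proof.
by move=> H; rewrite -(subnKC H) nseqD Pseq_cat; exists (Ps (nseq (m - j) x)).
Qed.

Local Notation hD := (hasseD sigma delta).

Lemma hasseD_rdiv s (f : {poly K}) : rdiv (Ps s) f -> hD s f = 0.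
Proof.
case=> G ->; have [m S] := Pseq_monic s.
rewrite /hasseD -[smul G _]addr0 skrem_uniq ?coef0 //.
by rewrite size_poly0 S.
Qed.

Lemma hasseD_lin s (f g : {poly K}) c : hD s (f + c *: g) = hD s f + c * hD s g.
Proof.
have [m S] := Pseq_monic s.
have [Sf [Gf Ef]] := skrem_spec f m; have [Sg [Gg Eg]] := skrem_spec g m.
rewrite /hasseD.
set Rf := skrem _ _ f _ in Sf Ef *; set Rg := skrem _ _ g _ in Sg Eg *.
have -> : f + c *: g = smul (Gf + c *: Gg) (Ps s) + (Rf + c *: Rg).
  rewrite {1}Ef {1}Eg skmulDl skmulZl scalerDr.
  by rewrite addrACA.
rewrite skrem_uniq // ?coefD ?coefZ //.
apply: leq_ltn_trans (size_polyD _ _) _; rewrite gtn_max Sf /=.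
exact: leq_ltn_trans (size_scale_leq _ _) Sg.
Qed.

Lemma hasseD0 s : hD s 0 = 0.
Proof.
have := hasseD_lin s 0 0 1; rewrite scale1r addr0 mul1r => h.
by apply/(addrI (hD s 0)); rewrite -h addr0.
Qed.

Lemma hasseDD s (f g : {poly K}) : hD s (f + g) = hD s f + hD s g.
Proof. by rewrite -[g in LHS]scale1r hasseD_lin mul1r. Qed.

Lemma hasseDZ s (g : {poly K}) c : hD s (c *: g) = c * hD s g.
Proof. by rewrite -[c *: g]add0r hasseD_lin hasseD0 add0r. Qed.

Lemma hasseDB s (f g : {poly K}) : hD s (f - g) = hD s f - hD s g.
Proof. by rewrite -scaleN1r hasseD_lin mulN1r. Qed.

Lemma hasseD_sum s I (r : seq I) (P : pred I) (F : I -> {poly K}) :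
  hD s (\sum_(i <- r | P i) F i) = \sum_(i <- r | P i) hD s (F i).
Proof. by elim/big_rec2: _ => [|i x y _ <-]; rewrite ?hasseD0 ?hasseDD. Qed.

Lemma hasse_rdiv s (f : {poly K}) :
  (forall j, (0 < j <= size s)%N -> hD (take j s) f = 0) -> rdiv (Ps s) f.
Proof.
elim/last_ind: s => [|s a IH] H; first exact: rdiv1.
have [G EG] : rdiv (Ps s) f.
  apply: IH => j /andP [j0 js]; have := H j; rewrite j0 size_rcons -cats1 takel_cat //.
  by apply; apply: leq_trans js _.
have mX1 : ('X - a%:P : {poly K}) \is monic by apply: monicXsubC.
have [SR [G1 E1]] := skrem_spec G mX1.
move: SR; rewrite size_XsubC => /size1_polyC ER.
set c := (skrem _ _ G _)`_0 in ER; rewrite ER in E1.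
have [m S] := Pseq_monic s; have [m' S'] := Pseq_monic (rcons s a).
have Ef : f = smul G1 (Ps (rcons s a)) + c *: Ps s.
  by rewrite EG E1 skmulDl skmulA -Pseq_rcons skmulCl.
have : hD (rcons s a) f = c.
  rewrite /hasseD Ef skrem_uniq //; last first.
    by apply: leq_ltn_trans (size_scale_leq _ _) _; rewrite S S' size_rcons.
  by rewrite coefZ size_rcons /= -[size s]/((size s).+1.-1) -S -lead_coefE (monicP m) mulr1.
move=> hc; have h2 : (0 < size (rcons s a) <= size (rcons s a))%N by rewrite size_rcons leqnn.
have := H _ h2; rewrite take_oversize // hc => c0.
by exists G1; rewrite Ef c0 scale0r addr0.
Qed.

Local Notation cj := (sd_conj sigma delta).

Lemma unit_neq0 (x : K) : x \is a GRing.unit -> x != 0.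
Proof. by apply: contraTneq => ->; rewrite unitr0. Qed.

Lemma conj_refl a : cj a a.
Proof.
exists 1; first exact: oner_neq0.
by rewrite rmorph1 delta1 invr1 !mulr1 mul1r addr0.
Qed.

Lemma delta_inv b : b \is a GRing.unit ->
  delta b^-1 = (sigma b)^-1 * - (delta b * b^-1).
Proof.
move=> ub; have us : sigma b \is a GRing.unit by apply: rmorph_unit.
have := delta_der b b^-1; rewrite mulrV // delta1 => /eqP.
rewrite eq_sym addr_eq0 => /eqP <-; by rewrite mulKr.
Qed.

Lemma conj_sym a b : cj a b -> cj b a.
Proof.
case=> be be0 Eb; have ub := Kdiv be0.
have us : sigma be \is a GRing.unit by apply: rmorph_unit.
exists be^-1; first by rewrite invr_eq0.
rewrite invrK rmorphV // delta_inv // Eb.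
rewrite -mulrDl -mulrDr addrK -!mulrA mulKr //.
by rewrite mulrA mulrVK.
Qed.

Lemma conj_trans a b c : cj a b -> cj b c -> cj a c.
Proof.
case=> be be0 Eb [ga ga0 Ec]; have ub := Kdiv be0; have ug := Kdiv ga0.
have ugb : ga * be \is a GRing.unit by rewrite unitrMl.
exists (ga * be); first exact: unit_neq0.
rewrite Ec Eb rmorphM delta_der invrM // mulrDr !mulrDl !mulrA.
by rewrite mulrK // addrA.
Qed.

Lemma skmul_lin e (p : {poly K}) : smul ('X - e%:P) p = mX p - e *: p.
Proof. by rewrite skmulBl skmulCl -['X]expr1 skmulXnl. Qed.

Lemma lin_ident (u b : K) : u \is a GRing.unit ->
  let f := (sigma u * b + delta u) * u^-1 in
  let e := f + sigma u in
  smul ('X - e%:P) ('X - b%:P) = smul ('X - f%:P) ('X - (b + u)%:P).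
Proof.
move=> uu f e.
have h1 : f * u = sigma u * b + delta u by rewrite mulrVK.
rewrite !skmul_lin; apply/polyP => k; rewrite !coefB !coefZ !coef_mX !coefB !coefX !coefC.
case: k => [|[|[|k]]] /=; rewrite ?coefB ?coefX ?coefC /= ?subr0 ?sub0r ?subrr ?mulr0 ?mulr1 ?raddf0 ?rmorph0 ?add0r ?addr0 ?delta1 ?raddfN ?rmorphN ?mulrN ?opprK ?(raddfD delta) ?(rmorphD sigma) ?opprD //.
- rewrite /e mulrDl mulrDr h1 -addrA; congr (_ + _).
  by rewrite addrCA [sigma u * b + _]addrC addKr.
- by rewrite /e !addr0 (raddfD sigma) opprD -addrA; congr (_ + _); exact: addrC.
Qed.


Lemma Pseq_nil : Ps [::] = 1. Proof. by []. Qed.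

Lemma TL (y : K) (s : seq K) : (forall z, z \in s -> cj y z) ->
  forall (b : K) (G : {poly K}), ~ cj y b -> rdiv (Ps s) (smul G ('X - b%:P)) ->
  exists s', size s' = size s /\ (forall z, z \in s' -> cj y z) /\ rdiv (Ps s') G.
Proof.
elim: s => [|c s IH] Hs b G nb Hd.
  by exists [::]; split=> //; split=> //; exact: rdiv1.
have cyc : cj y c by apply: Hs; rewrite mem_head.
have Hs' : forall z, z \in s -> cj y z by move=> z zs; apply: Hs; rewrite in_cons zs orbT.
set u := c - b.
have u0 : u != 0.
  apply/negP => /eqP /eqP; rewrite subr_eq0 => /eqP cb; apply: nb; by rewrite -cb.
have uu := Kdiv u0.
have ID := lin_ident b uu.
set f := (sigma u * b + delta u) * u^-1 in ID.
set e := f + sigma u in ID.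
have bu : b + u = c by rewrite /u addrC subrK.
rewrite bu in ID.
case: Hd => H EH; rewrite Pseq_cons in EH.
have [SR [G' EG]] := skrem_spec G (monicXsubC e).
move: SR; rewrite size_XsubC => /size1_polyC ER.
set g0 := (skrem _ _ G _)`_0 in ER; rewrite ER in EG.
have E2 : smul (smul H (Ps s) - smul G' ('X - f%:P) - g0%:P) ('X - c%:P) = (g0 * u)%:P.
  rewrite !skmulBl skmulA -EH skmulA -ID -skmulA {1}EG skmulDl !skmulCl.
  rewrite [_ + g0 *: _]addrC addrK -scalerBr opprB addrC addrA subrK -polyCB.
  by rewrite scale_polyC.
have D0 : smul H (Ps s) - smul G' ('X - f%:P) - g0%:P = 0.
  apply/eqP/negP => /negP nz; have [S _] := skmul_monic (monicXsubC c) nz.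
  move: S; rewrite E2 size_XsubC => S.
  have h1 := size_polyC_leq1 (g0 * u).
  have h2 : (0 < size (smul H (Ps s) - smul G' ('X - f%:P) - g0%:P)%R)%N by rewrite size_poly_gt0.
  lia.
have g00 : g0 = 0.
  move: E2; rewrite D0 skmul0l => /esym /eqP; rewrite polyC_eq0 => /eqP gu.
  by rewrite -(mulrK uu g0) gu mul0r.
rewrite g00 subr0 in D0; move/eqP: D0; rewrite subr_eq0 => /eqP E3.
rewrite g00 addr0 in EG.
have nf : ~ cj y f.
  move=> yf; apply: nb; apply: (conj_trans yf); apply: conj_sym.
  by exists u => //; rewrite /f mulrDl.
have [s' [S' [C' [K1 EK]]]] := IH Hs' f G' nf (ex_intro _ H (esym E3)).
exists (e :: s'); split; first by rewrite /= S'.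
split.
  move=> z; rewrite in_cons => /orP [/eqP -> | /C' //].
  apply: (conj_trans cyc); exists u => //.
  by rewrite /e /f -bu mulrDr !mulrDl mulrK // addrAC.
by exists K1; rewrite Pseq_cons -skmulA -EK.
Qed.

Fixpoint nc (ys : seq K) : Prop :=
  if ys is y :: ys' then (forall z, z \in ys' -> ~ cj y z) /\ nc ys' else True.

Definition conjs (bs : seq (K * seq K)) :=
  forall p, p \in bs -> forall z, z \in p.2 -> cj p.1 z.
Definition rdivs (bs : seq (K * seq K)) (F : {poly K}) :=
  forall p, p \in bs -> rdiv (Ps p.2) F.

Lemma TL_list (bs : seq (K * seq K)) : conjs bs ->
  forall (b : K) (G : {poly K}), (forall p, p \in bs -> ~ cj p.1 b) ->
  rdivs bs (smul G ('X - b%:P)) ->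
  exists bs', [/\ map fst bs' = map fst bs,
                  [seq size p.2 | p <- bs'] = [seq size p.2 | p <- bs],
                  conjs bs' & rdivs bs' G].
Proof.
elim: bs => [|[y s] bs IH] Hc b G Hn Hr; first by exists [::].
have Hc' : conjs bs by move=> p pb; apply: Hc; rewrite in_cons pb orbT.
have Hn' : forall p, p \in bs -> ~ cj p.1 b by move=> p pb; apply: Hn; rewrite in_cons pb orbT.
have Hr' : rdivs bs (smul G ('X - b%:P)) by move=> p pb; apply: Hr; rewrite in_cons pb orbT.
have [bs' [E1 E2 C' R']] := IH Hc' b G Hn' Hr'.
have [s' [S' [C1 R1]]] := TL (Hc (y, s) (mem_head _ _)) (Hn (y, s) (mem_head _ _))
                              (Hr (y, s) (mem_head _ _)).
exists ((y, s') :: bs'); split => /=; [by rewrite E1 | by rewrite E2 S' | |].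
  by move=> p; rewrite in_cons => /orP [/eqP -> | /C' //].
by move=> p; rewrite in_cons => /orP [/eqP -> | /R' //].
Qed.

Lemma GI (ys : seq K) : forall (bs : seq (K * seq K)) (F : {poly K}),
  map fst bs = ys -> nc ys -> conjs bs -> rdivs bs F ->
  (size F <= sumn [seq size p.2 | p <- bs])%N -> F = 0.
Proof.
elim: ys => [|y ys IH] bs F.
  case: bs => // _ _ _ _ /=; rewrite leqn0 size_poly_eq0 => /eqP //.
case: bs => [|[y' s] bs'] //= [-> Hm] [ncy ncys].
suff gen : forall n s bs' F, size s = n -> map fst bs' = ys -> conjs ((y, s) :: bs') ->
  rdivs ((y, s) :: bs') F -> (size F <= size s + sumn [seq size p.2 | p <- bs'])%N -> F = 0.
  by move=> Hc Hr Hs; apply: (gen _ s bs').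
elim=> [|n IHn] {}s {Hm}bs' {}F Sn Hm Hc Hr Hs.
  move: Sn => /size0nil Es; subst s.
  apply: (IH bs' F Hm ncys); first by move=> p pb; apply: Hc; rewrite in_cons pb orbT.
    by move=> p pb; apply: Hr; rewrite in_cons pb orbT.
  by rewrite add0n in Hs.
case: s Sn Hc Hr Hs => // c s1 [Sn] Hc Hr Hs.
have [-> // | F0] := eqVneq F 0.
have [H EH] := Hr _ (mem_head _ _); rewrite /= Pseq_cons -skmulA in EH.
set G := smul H (Ps s1) in EH.
have cyc : cj y c by apply: (Hc _ (mem_head _ _)); rewrite mem_head.
have Hc' : conjs bs' by move=> p pb; apply: Hc; rewrite in_cons pb orbT.
have Hn : forall p, p \in bs' -> ~ cj p.1 c.
  move=> p pb pc; apply: (ncy p.1); first by rewrite -Hm; apply: map_f.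
  exact: conj_trans cyc (conj_sym pc).
have Hr' : rdivs bs' (smul G ('X - c%:P)).
  by rewrite -EH => p pb; apply: Hr; rewrite in_cons pb orbT.
have [bs'' [E1 E2 C2 R2]] := TL_list Hc' Hn Hr'.
have G0 : G != 0 by apply: contraNneq F0 => G0; rewrite EH G0 skmul0l.
have [SF _] := skmul_monic (monicXsubC c) G0.
suff : G = 0 by move/eqP; rewrite (negbTE G0).
apply: (IHn s1 bs'' G Sn); first by rewrite E1.
- move=> p; rewrite in_cons => /orP [/eqP -> z zs /= | /C2 //].
  by apply: (Hc _ (mem_head _ _)); rewrite /= in_cons zs orbT.
- move=> p; rewrite in_cons => /orP [/eqP -> | /R2 //].
  by exists H.
- rewrite E2; move: Hs; rewrite EH SF size_XsubC /=.
  have : (0 < size G)%N by rewrite size_poly_gt0.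
  lia.
Qed.

Definition bsof (bl : seq (K * nat)) := [seq (p.1, nseq p.2 p.1) | p <- bl].

Lemma injB (bl : seq (K * nat)) (F : {poly K}) : nc (map fst bl) ->
  (forall p, p \in bl -> rdiv (Ps (nseq p.2 p.1)) F) ->
  (size F <= sumn (map snd bl))%N -> F = 0.
Proof.
move=> Hn Hr Hs; apply: (@GI (map fst bl) (bsof bl)) => //.
- by rewrite /bsof -map_comp.
- move=> p /mapP [q qb ->] z /=; rewrite mem_nseq => /andP [_ /eqP ->].
  exact: conj_refl.
- by move=> p /mapP [q qb ->]; apply: Hr.
- by rewrite /bsof -map_comp (eq_map (g := snd)) // => q /=; rewrite size_nseq.
Qed.

Definition Qprop (bl : seq (K * nat)) := exists Q : {poly K},
  [/\ Q \is monic, size Q = (sumn (map snd bl)).+1 &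
      forall p, p \in bl -> rdiv (Ps (nseq p.2 p.1)) Q].
Definition Eprop (bl : seq (K * nat)) := forall t : K -> nat -> K,
  exists F : {poly K}, (size F <= sumn (map snd bl))%N /\
    forall p, p \in bl -> forall j, (0 < j <= p.2)%N -> hD (nseq j p.1) F = t p.1 j.

Lemma P_nil : Qprop [::] /\ Eprop [::].
Proof.
split; first by exists 1; split; rewrite ?monic1 ?size_poly1.
by move=> t; exists 0; rewrite size_poly0.
Qed.

Lemma P_cons0 x bl : Qprop bl /\ Eprop bl -> Qprop ((x, 0%N) :: bl) /\ Eprop ((x, 0%N) :: bl).
Proof.
case=> [[Q [mQ SQ DQ]] HE]; split.
  exists Q; split => //= p; rewrite in_cons => /orP [/eqP -> | /DQ //].
  exact: rdiv1.
move=> t; have [F [SF HF]] := HE t; exists F; split => // p.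
rewrite in_cons => /orP [/eqP -> j /= | /HF //].
by rewrite leqn0 andbC => /andP [/eqP ->].
Qed.

Lemma nseqSr m (x : K) : nseq m.+1 x = rcons (nseq m x) x.
Proof. by rewrite -cats1 -addn1 nseqD. Qed.

Lemma lin_fix (h x : K) : exists e : K,
  smul ('X - e%:P) h%:P = smul (sigma h)%:P ('X - x%:P).
Proof.
have [-> | h0] := eqVneq h 0.
  by exists 0; rewrite skmul0r (rmorph0 sigma) polyC0 skmul0l.
have uh := Kdiv h0.
exists ((sigma h * x + delta h) * h^-1).
rewrite skmul_lin skmulCl; apply/polyP => k.
rewrite !coefB !coefZ !coef_mX !coefB !coefX !coefC.
case: k => [|[|k]] /=; rewrite ?coefC /= ?subr0 ?sub0r ?mulr0 ?mulr1 ?raddf0 ?rmorph0 ?add0r ?addr0 ?mulrN //.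
by rewrite mulrVK // opprD addrCA subrr addr0.
Qed.

Lemma P_step x m bl : nc (x :: map fst bl) ->
  Qprop ((x, m) :: bl) /\ Eprop ((x, m) :: bl) ->
  Qprop ((x, m.+1) :: bl) /\ Eprop ((x, m.+1) :: bl).
Proof.
move=> Hnc [[Q0 [mQ0 SQ0 DQ0]] HE].
have Dbl : forall p, p \in bl -> rdiv (Ps (nseq p.2 p.1)) Q0.
  by move=> p pb; apply: DQ0; rewrite in_cons pb orbT.
have [H EH] := DQ0 _ (mem_head _ _); rewrite /= in EH.
have [_ [H' EH']] := skrem_spec H (monicXsubC x).
set h := (skrem _ _ H _) in EH'.
have [SR _] := skrem_spec H (monicXsubC x).
move: SR; rewrite -/h size_XsubC => /size1_polyC Eh; rewrite Eh in EH'.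
have [e He] := lin_fix h`_0 x.
set Q1 := smul ('X - e%:P) Q0.
have DQ1 : rdiv (Ps (nseq m.+1 x)) Q1.
  exists (smul ('X - e%:P) H' + (sigma h`_0)%:P).
  rewrite /Q1 EH -skmulA {1}EH' skmulDr He -skmulA -skmulDl.
  by rewrite nseqSr Pseq_rcons skmulA.
have [S1 L1] := skmul_monic mQ0 (monic_neq0 (monicXsubC e)).
split.
  exists Q1; split.
  - by apply/monicP; rewrite L1 lead_coefXsubC.
  - by rewrite S1 size_XsubC SQ0 /=.
  - move=> p; rewrite in_cons => /orP [/eqP -> // | pb].
    exact: rdiv_mull (Dbl _ pb).
move=> t; have [F0 [SF0 HF0]] := HE t.
set D := hD (nseq m.+1 x).
have DQ : D Q0 != 0.
  apply/negP => /eqP DQ.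
  have : rdiv (Ps (nseq m.+1 x)) Q0.
    apply: hasse_rdiv => j; rewrite size_nseq => /andP [j0 jm].
    rewrite take_nseq //; case: (ltngtP j m.+1) jm => // [jl _ | -> _ //].
    apply: hasseD_rdiv; apply: rdiv_trans (DQ0 _ (mem_head _ _)).
    exact: rdiv_nseq.
  move=> Dx; have Q00 : Q0 = 0.
    apply: (@injB ((x, m.+1) :: bl)) => //.
      by move=> p; rewrite in_cons => /orP [/eqP -> // | /Dbl].
    by rewrite SQ0 /=.
  by move: (monic_neq0 mQ0); rewrite Q00 eqxx.
have uD := Kdiv DQ.
set lam := (t x m.+1 - D F0) * (D Q0)^-1.
exists (F0 + lam *: Q0); split.
  apply: leq_trans (size_polyD _ _) _; rewrite geq_max /=.
  apply/andP; split; first by apply: leq_trans SF0 _; rewrite /= leqnSn.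
  by apply: leq_trans (size_scale_leq _ _) _; rewrite SQ0.
have old : forall p, p \in (x, m) :: bl -> forall j, (0 < j <= p.2)%N ->
    hD (nseq j p.1) (F0 + lam *: Q0) = t p.1 j.
  move=> p pb j Hj; rewrite hasseD_lin HF0 // hasseD_rdiv ?mulr0 ?addr0 //.
  apply: rdiv_trans (DQ0 _ pb); apply: rdiv_nseq.
  by case/andP: Hj.
move=> p; rewrite in_cons => /orP [/eqP -> j /= | pb]; last first.
  by apply: old; rewrite in_cons pb orbT.
move=> /andP [j0 jm]; case: (ltngtP j m.+1) jm => // [jl _ | -> _].
  by apply: (old (x, m) (mem_head _ _)); rewrite j0.
by rewrite hasseD_lin -/D mulrVK // addrC subrK.
Qed.

Lemma P_all bl : nc (map fst bl) -> Qprop bl /\ Eprop bl.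
Proof.
elim: bl => [|[x r] bl IH] /=; first by move=> _; exact: P_nil.
case=> Hx Hn; elim: r => [|r IHr]; first exact: P_cons0 (IH Hn).
by apply: P_step.
Qed.

Lemma main_sec (n : nat) (a : 'I_n -> K)
  (a_nc : forall i j : 'I_n, i != j -> ~ sd_conj sigma delta (a i) (a j))
  (r : 'I_n -> nat) (N : nat) (HN : N = (\sum_(i < n) r i)%N) :
  (forall b : 'I_n -> nat -> K,
     exists! f : {poly K}, (size f <= N)%N /\
       forall (i : 'I_n) (j : nat), (j < r i)%N ->
         hderiv sigma delta j (a i) f = b i j)
  /\
  (exists W : 'M[K]_N,
     conf_vdm sigma delta a r N *m W = 1%:M /\
     W *m conf_vdm sigma delta a r N = 1%:M).
Proof.
set bl := [seq (a i, r i) | i <- enum 'I_n].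
have a_inj : forall i j, a i = a j -> i = j.
  move=> i j E; apply/eqP; apply/negP => /negP ne; apply: (a_nc i j ne).
  rewrite E; exact: conj_refl.
have Hnc : nc (map fst bl).
  rewrite /bl -map_comp; move: (enum_uniq (pred_of_simpl (@predT 'I_n))).
  elim: (enum _) => //= i s IH /andP [ni us]; split; last exact: IH.
  move=> z /mapP [j js ->]; apply: a_nc; apply: contraNneq ni => ->; exact: js.
have sumN : sumn (map snd bl) = N.
  rewrite HN /bl -map_comp sumnE big_map big_enum /=.
  by apply: eq_bigl => i; rewrite inE.
have inbl : forall i, (a i, r i) \in bl by move=> i; apply: map_f; rewrite mem_enum.
have [_ HE] := P_all Hnc.
have U : forall F F' : {poly K}, (size F <= N)%N -> (size F' <= N)%N ->
    (forall i j, (j < r i)%N -> hderiv sigma delta j (a i) F = hderiv sigma delta j (a i) F') ->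
    F = F'.
  move=> F F' SF SF' HF; apply/eqP; rewrite -subr_eq0; apply/eqP.
  apply: (injB Hnc); last first.
    rewrite sumN; apply: leq_trans (size_polyD _ _) _.
    by rewrite size_polyN geq_max SF SF'.
  move=> p /mapP [i _ ->] /=; apply: hasse_rdiv => j.
  rewrite size_nseq => /andP [j0 jr]; rewrite take_nseq // hasseDB.
  have jj : j.-1.+1 = j by rewrite prednK.
  have h1 : (j.-1 < r i)%N by rewrite jj.
  by have := HF i j.-1 h1; rewrite /hderiv jj => ->; rewrite subrr.
split.
  move=> b.
  pose t (x : K) (j : nat) := if [pick i | a i == x] is Some i then b i j.-1 else 0.
  have [F [SF HF]] := HE t; rewrite sumN in SF.
  have HF' : forall i j, (j < r i)%N -> hderiv sigma delta j (a i) F = b i j.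
    move=> i j ji; rewrite /hderiv (HF _ (inbl i)) //= /t.
    case: pickP => [i' /eqP /a_inj -> // | H].
    by move: (H i); rewrite eqxx.
  exists F; split; first by split.
  by move=> F' [SF' HF2]; apply: U => // i j ji; rewrite HF' // HF2.
set cs := conf_cols a r.
have cs_mem : forall q, q \in cs -> exists i j, (j < r i)%N /\ q = (a i, j.+1).
  move=> q /allpairsPdep [i [j [_ ji ->]]]; exists i, j; split => //.
  by move: ji; rewrite mem_iota.
have cs_mem2 : forall i j, (j < r i)%N -> (a i, j.+1) \in cs.
  move=> i j ji; apply/allpairsPdep; exists i, j; split => //.
    by rewrite mem_enum.
  by rewrite mem_iota.
have cs_uniq : uniq cs.
  apply: allpairs_uniq_dep; first exact: enum_uniq.
    by move=> i _; exact: iota_uniq.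
  move=> [i j] [i' j'] _ _ /= [/a_inj E1 E2]; subst i'.
  by move: E2 => [->].
have cs_size : size cs = N.
  rewrite size_flatten /shape -map_comp -sumN /bl -map_comp.
  by congr sumn; apply: eq_map => i /=; rewrite size_map size_iota.
set q := fun c : 'I_N => nth (0, 0%N) cs c.
have q_in : forall c : 'I_N, q c \in cs by move=> c; rewrite /q mem_nth // cs_size.
have q_inj : forall c c' : 'I_N, (q c == q c') = (c == c').
  by move=> c c'; rewrite /q nth_uniq // cs_size.
have cond_cs : forall (F : {poly K}) (t : K -> nat -> K),
    (forall p, p \in bl -> forall j, (0 < j <= p.2)%N -> hD (nseq j p.1) F = t p.1 j) ->
    forall p, p \in cs -> hD (nseq p.2 p.1) F = t p.1 p.2.
  move=> F t HF p /cs_mem [i [j [ji ->]]] /=.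
  by have := HF _ (inbl i) j.+1; apply.
have : forall c : 'I_N, exists F : {poly K}, (size F <= N)%N /\
    forall p, p \in cs -> hD (nseq p.2 p.1) F = (p == q c)%:R.
  move=> c; have [F [SF HF]] := HE (fun x j => ((x, j) == q c)%:R).
  exists F; split; first by rewrite -sumN.
  by move=> p pc; rewrite (cond_cs F (fun x j => ((x, j) == q c)%:R) HF) //; case: p pc.
case/fin_all_exists => Fc HFc.
have vdmE : forall (k c : 'I_N), conf_vdm sigma delta a r N k c = hD (nseq (q c).2 (q c).1) 'X^k.
  by move=> k c; rewrite mxE /q; case: nth.
have expand : forall (F : {poly K}) s, (size F <= N)%N ->
    hD s F = \sum_(k < N) F`_k * hD s 'X^k.
  move=> F s SF.
  have E : F = \sum_(k < N) F`_k *: 'X^k.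
    rewrite -poly_def; apply/polyP => i; rewrite coef_poly; case: ltnP => // H.
    by rewrite nth_default //; apply: leq_trans H.
  by rewrite {1}E hasseD_sum; apply: eq_bigr => k _; rewrite hasseDZ.
exists (\matrix_(c, k) (Fc c)`_k); split.
  apply/matrixP => k k'; rewrite !mxE.
  set G := \sum_(c < N) conf_vdm sigma delta a r N k c *: Fc c.
  have GE : G`_k' = \sum_(c < N) conf_vdm sigma delta a r N k c * (\matrix_(c, k) (Fc c)`_k) c k'.
    by rewrite /G coef_sum; apply: eq_bigr => c _; rewrite coefZ mxE.
  rewrite -GE.
  have SG : (size G <= N)%N.
    apply: (big_ind (fun x : {poly K} => (size x <= N)%N)) => //.
    - by rewrite size_poly0.
    - by move=> x y Hx Hy; apply: leq_trans (size_polyD _ _) _; rewrite geq_max Hx Hy.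
    - by move=> c _; apply: leq_trans (size_scale_leq _ _) _; case: (HFc c).
  have -> : G = 'X^k.
    apply: U => //; first by rewrite size_polyXn.
    move=> i j ji; rewrite /hderiv /G hasseD_sum.
    have qi := cs_mem2 i j ji.
    have ic : (index (a i, j.+1) cs < N)%N by rewrite -cs_size index_mem.
    set c0 := Ordinal ic.
    have qc0 : q c0 = (a i, j.+1) by rewrite /q nth_index.
    rewrite (bigD1 c0) //= big1; last first.
      move=> c ne; rewrite hasseDZ; have [_ Hc] := HFc c.
      by have := Hc _ qi; rewrite /= => ->; rewrite -qc0 q_inj eq_sym (negbTE ne) mulr0.
    rewrite addr0 hasseDZ; have [_ Hc] := HFc c0.
    have := Hc _ qi; rewrite /= => ->; rewrite -qc0 eqxx mulr1 vdmE qc0.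
    by [].
  by rewrite coefXn eq_sym.
apply/matrixP => c c'; rewrite [LHS]mxE [RHS]mxE.
have [SF HF] := HFc c.
rewrite (eq_bigr (fun k : 'I_N => (Fc c)`_k * hD (nseq (q c').2 (q c').1) 'X^k)); last first.
  by move=> k _; rewrite vdmE mxE.
rewrite -expand // HF // q_inj eq_sym.
by [].
Qed.

End SkewAlg.

Theorem mainTheorem9
  (K : unitRingType)
  (Kdiv : forall x : K, x != 0 -> x \is a GRing.unit)
  (sigma : {rmorphism K -> K})
  (delta : {additive K -> K})
  (delta_der : forall u v : K, delta (u * v) = sigma u * delta v + delta u * v)
  (n : nat) (a : 'I_n -> K)
  (a_nc : forall i j : 'I_n, i != j -> ~ sd_conj sigma delta (a i) (a j))
  (r : 'I_n -> nat) (r_pos : forall i, (0 < r i)%N)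
  (N : nat) (HN : N = (\sum_(i < n) r i)%N) :
  (forall b : 'I_n -> nat -> K,
     exists! f : {poly K}, (size f <= N)%N /\
       forall (i : 'I_n) (j : nat), (j < r i)%N ->
         hderiv sigma delta j (a i) f = b i j)
  /\
  (exists W : 'M[K]_N,
     conf_vdm sigma delta a r N *m W = 1%:M /\
     W *m conf_vdm sigma delta a r N = 1%:M).
Proof.
exact: (@main_sec K Kdiv sigma delta delta_der n a a_nc r N HN).
Qed.
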